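(* The continuum $|\mathbb G|$ is hereditarily unicoherent, i.e. the intersection of any two subcontinua of $|\mathbb G|$ is connected.
   Context: A graph is a pair $A=(V(A),E(A))$ with $E(A)\subseteq V(A)^2$ reflexive and symmetric; a topological graph additionally has $V$ compact, second countable, zero-dimensional and $E$ closed. Epimorphisms are (continuous) edge-preserving maps surjective on vertices and edges. A vertex set $S$ is disconnected if it splits into two nonempty closed subsets with no edges between them; otherwise connected; components are maximal connected subsets. An epimorphism $f\colon A\to B$ is confluent if for every connected $Q\subseteq V(B)$ each component $C$ of $f^{-1}(Q)$ has $f(C)=Q$. $\mathbb G$ is the projective Fraïssé limit of the class of finite connected graphs with confluent epimorphisms: the unique topological graph such that (1) every finite connected graph is a confluent epimorphic image of $\mathbb G$; (2) for finite connected $A,B$ and confluent epimorphisms $f\colon\mathbb G\to A$, $g\colon B\to A$ there is a confluent epimorphism $h\colon\mathbb G\to B$ with $f=g\circ h$; (3) for each $\varepsilon>0$ some confluent epimorphism from $\mathbb G$ onto a finite connected graph has all point-preimages of diameter $<\varepsilon$. The edge relation of $\mathbb G$ is an equivalence relation and $|\mathbb G|=V(\mathbb G)/E(\mathbb G)$ is its topological realization. *)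

(* Defs.v *)
From HB Require Import structures.
From mathcomp Require Import all_boot all_order all_algebra.
From mathcomp Require Import all_classical all_reals all_analysis.
Set Implicit Arguments. Unset Strict Implicit. Unset Printing Implicit Defensive.
Import Order.TTheory GRing.Theory Num.Theory.
Local Open Scope classical_set_scope.
Local Open Scope ring_scope.

Definition fgraph (A : finType) (eA : rel A) := reflexive eA /\ symmetric eA.

(* S is disconnected iff it splits into two nonempty (closed = arbitrary in the
   discrete finite case) disjoint subsets with no edges between them *)
Definition fconnected (A : finType) (eA : rel A) (S : {set A}) : Prop :=
  ~ exists S1 S2 : {set A},
      [/\ S1 != finset.set0, S2 != finset.set0, S1 :|: S2 = S, S1 :&: S2 = finset.set0 &
          forall x y, x \in S1 -> y \in S2 -> ~~ eA x y].

Definition fcomponent (A : finType) (eA : rel A) (S C : {set A}) : Prop :=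
  [/\ C \subset S, fconnected eA C &
      forall D : {set A}, C \subset D -> D \subset S -> fconnected eA D -> D = C].

Definition fin_conn_graph (A : finType) (eA : rel A) : Prop :=
  [/\ fgraph eA, (0 < #|A|)%N & fconnected eA [set: A]].

Definition fepi (A B : finType) (eA : rel A) (eB : rel B) (f : A -> B) : Prop :=
  [/\ forall x y, eA x y -> eB (f x) (f y),
      forall b, exists a, f a = b &
      forall b1 b2, eB b1 b2 -> exists a1 a2, [/\ eA a1 a2, f a1 = b1 & f a2 = b2]].

Definition fconfluent (A B : finType) (eA : rel A) (eB : rel B) (f : A -> B)
  : Prop :=
  fepi eA eB f /\
  forall Q : {set B}, fconnected eB Q ->
    forall C : {set A}, fcomponent eA (f @^-1: Q) C -> f @: C = Q.

Definition clopen_basis (T : topologicalType) : Prop :=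
  forall (x : T) (U : set T), nbhs x U ->
    exists V : set T, [/\ open V, closed V, V x & V `<=` U].

Definition top_graph (T : topologicalType) (E : set (T * T)) : Prop :=
  [/\ compact [set: T], second_countable (T := T), clopen_basis T, closed E &
      (forall x, E (x, x)) /\ (forall x y, E (x, y) -> E (y, x))].

Definition tconnected (T : topologicalType) (E : set (T * T)) (S : set T) : Prop :=
  ~ exists S1 S2 : set T,
      [/\ S1 !=set0, S2 !=set0, S1 `|` S2 = S, S1 `&` S2 = set0 &
      [/\ exists2 F1, closed F1 & S1 = S `&` F1,
          exists2 F2, closed F2 & S2 = S `&` F2 &
          forall x y, S1 x -> S2 y -> ~ E (x, y)]].

Definition tcomponent (T : topologicalType) (E : set (T * T)) (S C : set T)
  : Prop :=
  [/\ C `<=` S, tconnected E C &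
      forall D : set T, C `<=` D -> D `<=` S -> tconnected E D -> D = C].

(* continuous epimorphism from a topological graph onto a finite graph
   (the finite graph carries the discrete topology) *)
Definition tepi (T : topologicalType) (E : set (T * T)) (A : finType)
  (eA : rel A) (f : T -> A) : Prop :=
  [/\ forall a, open (f @^-1` [set a]),
      forall x y, E (x, y) -> eA (f x) (f y),
      forall a, exists x, f x = a &
      forall a1 a2, eA a1 a2 -> exists x1 x2, [/\ E (x1, x2), f x1 = a1 & f x2 = a2]].

Definition tconfluent (T : topologicalType) (E : set (T * T)) (A : finType)
  (eA : rel A) (f : T -> A) : Prop :=
  tepi E eA f /\
  forall Q : {set A}, fconnected eA Q ->
    forall C : set T, tcomponent E (f @^-1` [set a | a \in Q]) C ->
      f @` C = [set a | a \in Q].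

(* (T, E) is (the) projective Fraisse limit G of finite connected graphs with
   confluent epimorphisms, via properties (1)-(3); the metric on T is used for
   the diameter condition (3). *)
Definition is_G (R : realType) (T : pseudoMetricType R) (E : set (T * T)) : Prop :=
  [/\ top_graph E, hausdorff_space T,
   forall (A : finType) (eA : rel A), fin_conn_graph eA ->
     exists f : T -> A, tconfluent E eA f,
   forall (A B : finType) (eA : rel A) (eB : rel B) (f : T -> A) (g : B -> A),
     fin_conn_graph eA -> fin_conn_graph eB ->
     tconfluent E eA f -> fconfluent eB eA g ->
     exists h : T -> B, tconfluent E eB h /\ (forall x, f x = g (h x)) &
   forall eps : R, 0 < eps ->
     exists (A : finType) (eA : rel A) (f : T -> A),
       [/\ fin_conn_graph eA, tconfluent E eA f &
           forall x y, f x = f y -> ball x eps y]].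

Definition is_quotient_by (T Y : topologicalType) (E : set (T * T)) (q : T -> Y)
  : Prop :=
  [/\ forall y : Y, exists x, q x = y,
      forall x x', q x = q x' <-> E (x, x') &
      forall U : set Y, open U <-> open (q @^-1` U)].

Definition hereditarily_unicoherent (Y : topologicalType) : Prop :=
  forall K L : set Y,
    K !=set0 -> compact K -> connected K ->
    L !=set0 -> compact L -> connected L ->
    connected (K `&` L).

(* Main.v *)
Require Import Defs.
From mathcomp Require Import all_boot all_order all_algebra.
From mathcomp Require Import all_classical all_reals all_analysis.
From HB Require Import structures.
From mathcomp Require Import lra.
Require Import Defs.
Set Implicit Arguments. Unset Strict Implicit. Unset Printing Implicit Defensive.
Import Order.TTheory GRing.Theory Num.Theory.

Section Fin.
Variables (A : finType) (e : rel A).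

Lemma fconn_closed (S Z : {set A}) : fconnected e S -> Z \subset S -> Z != finset.set0 ->
  (forall x y, x \in Z -> y \in S -> e x y -> y \in Z) -> S \subset Z.
Proof.
move=> cS ZS Z0 cl; apply/fintype.subsetP=> y yS; apply/negPn/negP => yZ.
apply: cS; exists Z, (S :\: Z); split => //.
- by apply/set0Pn; exists y; rewrite finset.inE yZ yS.
- apply/setP => x; rewrite !finset.inE; case: (boolP (x \in Z)) => xZ //=.
  by rewrite (fintype.subsetP ZS).
- by apply/setP => x; rewrite !finset.inE; case: (x \in Z).
- move=> x w xZ; rewrite finset.inE => /andP[wZ wS]; apply/negP => exw.
  by rewrite (cl _ _ xZ wS exw) in wZ.
Qed.

Lemma fconn_of_closed (S : {set A}) :
  (forall Z : {set A}, Z \subset S -> Z != finset.set0 ->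
     (forall x y, x \in Z -> y \in S -> e x y -> y \in Z) -> S \subset Z) ->
  fconnected e S.
Proof.
move=> H [S1 [S2 [n1 n2 U I ne]]].
have SS1 : S \subset S1.
  apply: H => //; first by rewrite -U finset.subsetUl.
  move=> x y xS1 yS exy; move: yS; rewrite -U finset.inE => /orP[] // yS2.
  by move: (ne _ _ xS1 yS2); rewrite exy.
case/set0Pn: n2 => w wS2.
have : w \in S1 :&: S2 by rewrite finset.inE wS2 (fintype.subsetP SS1) // -U finset.inE wS2 orbT.
by rewrite I finset.inE.
Qed.

Lemma fconn1 (u : A) : fconnected e [set u].
Proof.
apply: fconn_of_closed => Z ZS /set0Pn[z zZ] _.
by move: (fintype.subsetP ZS _ zZ); rewrite finset.inE => /eqP zu; rewrite finset.sub1set -zu.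
Qed.

Hypothesis esym : symmetric e.

Lemma fconn_add (C : {set A}) c c' : fconnected e C -> c \in C -> e c c' ->
  fconnected e (c' |: C).
Proof.
move=> cC cin ecc'; apply: fconn_of_closed => Z ZS Z0 cl.
case: (boolP [exists z, (z \in Z) && (z \in C)]).
- case/existsP => z /andP[zZ zC].
  have CZ : C \subset Z :&: C.
    apply: fconn_closed => //; first exact: finset.subsetIr.
      by apply/set0Pn; exists z; rewrite finset.inE zZ zC.
    move=> x y; rewrite finset.inE => /andP[xZ xC] yC exy; rewrite finset.inE yC andbT.
    by apply: (cl x) => //; rewrite in_setU1 yC orbT.
  have cZ : c \in Z by move: (fintype.subsetP CZ _ cin); rewrite finset.inE => /andP[].
  have c'Z : c' \in Z by apply: (cl c) => //; exact: setU11.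
  apply/fintype.subsetP => x; rewrite in_setU1 => /orP[/eqP -> //|xC].
  by move: (fintype.subsetP CZ _ xC); rewrite finset.inE => /andP[].
- rewrite negb_exists => /forallP H.
  case/set0Pn: Z0 => z zZ.
  move: (fintype.subsetP ZS _ zZ); rewrite in_setU1 => /orP[/eqP zc'|zC]; last first.
    by move: (H z); rewrite zZ zC.
  have cZ : c \in Z by apply: (cl c') => //; [rewrite -zc' | rewrite in_setU1 cin orbT | rewrite esym].
  by move: (H c); rewrite cZ cin.
Qed.

End Fin.

Section Cover.
Variables (A : finType) (eA : rel A) (a b R : {set A}).
Hypothesis gA : fgraph eA.
Hypothesis hR : forall x y, x \in a -> y \in a -> x \in b -> y \in b -> eA x y ->
  (x \in R) = (y \in R).

Definition tau (x y : A) : bool :=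
  if (x \in a) && (y \in a) then false
  else if (x \in b) && (y \in b) then (x \in R) (+) (y \in R) else false.
Definition eB : rel (A * bool) :=
  fun u v => eA u.1 v.1 && (v.2 == u.2 (+) tau u.1 v.1).

Lemma tau_sym x y : tau x y = tau y x.
Proof. by rewrite /tau andbC [(y \in b) && _]andbC addbC. Qed.
Lemma tau_xx x : tau x x = false.
Proof. by rewrite /tau; case: ifP => //; case: ifP => // _ _; exact: addbb. Qed.

Lemma eB_graph : fgraph eB.
Proof.
case: gA => refl sym; split.
- by move=> [x i]; rewrite /eB /= refl tau_xx addbF eqxx.
- move=> [x i] [y j]; rewrite /eB /= sym tau_sym; congr (_ && _).
  by case: i; case: j; case: (tau y x).
Qed.

Lemma eB_confluent : fconfluent eB eA fst.
Proof.
case: gA => refl sym.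
have esymB := (eB_graph).2.
split.
  split.
  - by move=> [x i] [y j] /andP[].
  - by move=> x; exists (x, false).
  - move=> x y exy; exists (x,false), (y, tau x y); split => //.
    by rewrite /eB /= exy eqxx.
move=> Q cQ C [CS cC maxC].
have [C0|[c cC']] := set_0Vmem C.
  rewrite C0 imset0; apply/setP => q; rewrite finset.inE; apply/esym/negP => qQ.
  have := maxC [set (q,false)]; rewrite C0 => /(_ (finset.sub0set _)).
  move=> /(_ _ (@fconn1 _ eB (q, false))) H.
  have : (q, false) \in [set (q, false)] by rewrite set11.
  rewrite H ?finset.inE //.
  by rewrite finset.sub1set finset.inE.
have CQ : fst @: C \subset Q.
  apply/fintype.subsetP => y /imsetP[u uC ->].
  by move: (fintype.subsetP CS _ uC); rewrite finset.inE.
apply/eqP; rewrite finset.eqEsubset CQ /=.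
apply: (fconn_closed cQ) => //.
  by apply/set0Pn; exists c.1; apply: imset_f.
move=> x y /imsetP[u uC ->] yQ exy.
pose d := (y, u.2 (+) tau u.1 y).
have eud : eB u d by rewrite /eB /= exy eqxx.
have dS : d |: C \subset fst @^-1: Q.
  apply/fintype.subsetP => v; rewrite in_setU1 => /orP[/eqP ->|vC].
    by rewrite finset.inE.
  exact: (fintype.subsetP CS).
have := maxC (d |: C) (finset.subsetUr _ _) dS (fconn_add esymB cC uC eud).
move=> dC; apply/imsetP; exists d => //.
by rewrite -dC setU11.
Qed.

Variables (p0 r0 : A).
Hypotheses (cA : fconnected eA [set: A]) (ca : fconnected eA a) (cb : fconnected eA b).
Hypotheses (p0a : p0 \in a) (p0b : p0 \in b) (r0a : r0 \in a) (r0b : r0 \in b).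
Hypotheses (p0R : p0 \in R) (r0R : r0 \notin R).

Lemma eB_conn : fconnected eB [set: A * bool].
Proof.
case: gA => refl sym.
apply: fconn_of_closed => P _ P0 clP.
have clP' : forall u v, u \in P -> eB u v -> v \in P.
  by move=> u v uP euv; apply: (clP u) => //; rewrite finset.inE.
case/set0Pn: P0 => u0 u0P.
pose Z1 := [set x | ((x,false) \in P) || ((x,true) \in P)].
have Z1all : [set: A] \subset Z1.
  apply: (fconn_closed cA); first exact: finset.subsetT.
    by apply/set0Pn; exists u0.1; rewrite finset.inE; case: u0 u0P => x [] ->; rewrite ?orbT.
  move=> x y; rewrite finset.inE => xP _ exy; rewrite finset.inE.
  case/orP: xP => xP.
    have := clP' _ (y, false (+) tau x y) xP; rewrite /eB /= exy eqxx => /(_ isT).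
    by case: (tau x y) => ->; rewrite ?orbT.
  have := clP' _ (y, true (+) tau x y) xP; rewrite /eB /= exy eqxx => /(_ isT).
  by case: (tau x y) => ->; rewrite ?orbT.
have [i p0i] : exists i, (p0, i) \in P.
  move: (fintype.subsetP Z1all p0 (finset.in_setT _)); rewrite finset.inE => /orP[] H.
    by exists false.
  by exists true.
pose Za := [set x in a | (x, i) \in P].
have aZa : a \subset Za.
  apply: (fconn_closed ca).
  - by apply/fintype.subsetP => x; rewrite finset.inE => /andP[].
  - by apply/set0Pn; exists p0; rewrite finset.inE p0a.
  move=> x y; rewrite finset.inE => /andP[xa xP] ya exy; rewrite finset.inE ya /=.
  have := clP' _ (y, i (+) tau x y) xP; rewrite /eB /= exy eqxx => /(_ isT).
  by rewrite /tau xa ya /= addbF.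
have r0i : (r0, i) \in P.
  by move: (fintype.subsetP aZa _ r0a); rewrite finset.inE => /andP[].
pose Zb := [set x in b | (x, i (+) (x \in R) (+) (r0 \in R)) \in P].
have bZb : b \subset Zb.
  apply: (fconn_closed cb).
  - by apply/fintype.subsetP => x; rewrite finset.inE => /andP[].
  - apply/set0Pn; exists r0; rewrite finset.inE r0b /=.
    by rewrite -addbA addbb addbF.
  move=> x y; rewrite finset.inE => /andP[xb xP] yb exy; rewrite finset.inE yb /=.
  have := clP' _ (y, i (+) (x \in R) (+) (r0 \in R) (+) tau x y) xP.
  rewrite /eB /= exy eqxx => /(_ isT).
  rewrite /tau xb yb /=.
  case: ifP => [/andP[xa ya]|_].
    by rewrite (hR xa ya xb yb exy) addbF.
  by case: (x \in R); case: (y \in R); case: (r0 \in R); case: (i).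
have p0ni : (p0, ~~ i) \in P.
  move: (fintype.subsetP bZb _ p0b); rewrite finset.inE => /andP[_].
  by rewrite p0R (negbTE r0R) addbT addbF.
pose Z2 := [set x | ((x,false) \in P) && ((x,true) \in P)].
have Z2all : [set: A] \subset Z2.
  apply: (fconn_closed cA); first exact: finset.subsetT.
    apply/set0Pn; exists p0; rewrite finset.inE.
    by move: p0i p0ni; case: (i) => /= -> ->.
  move=> x y; rewrite finset.inE => /andP[xP1 xP2] _ exy; rewrite finset.inE.
  have := clP' _ (y, false (+) tau x y) xP1; rewrite /eB /= exy eqxx => /(_ isT).
  have := clP' _ (y, true (+) tau x y) xP2; rewrite /eB /= exy eqxx => /(_ isT).
  by case: (tau x y) => /= -> ->.
apply/fintype.subsetP => -[x j] _.
move: (fintype.subsetP Z2all x (finset.in_setT _)); rewrite finset.inE => /andP[].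
by case: j.
Qed.
End Cover.

Local Open Scope classical_set_scope.
Local Open Scope ring_scope.

Section An.
Variables (R : realType) (T : pseudoMetricType R).

Lemma pick_pos (P : R -> Prop) : (\forall e \near 0^'+, P e) -> exists2 e, 0 < e & P e.
Proof.
move=> H; have [e [e0 Pe]] := filter_ex (filterI (nbhs_right_gt 0) H).
by exists e.
Qed.

Lemma L1 (E : set (T * T)) (S1 S2 : set T) : closed E -> compact S1 -> compact S2 ->
  (forall x y, S1 x -> S2 y -> ~ E (x, y)) ->
  exists2 eta, 0 < eta & forall s1 s2 x y, S1 s1 -> S2 s2 ->
     ball s1 eta x -> ball s2 eta y -> ~ E (x, y).
Proof.
move=> cE c1 c2 sep.
have H : \forall eta \near 0^'+, (S1 `*` S2) `<=` (fun st : T * T => forall x y,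
   ball st.1 eta x -> ball st.2 eta y -> ~ E (x, y)).
  apply: (iffLR (compact_near_coveringP _) (compact_setX c1 c2)).
  move=> [s1 s2] [/= S1s S2s].
  have : nbhs (s1, s2) (~` E).
    by apply: open_nbhs_nbhs; split; [rewrite openC | exact: sep].
  case/nbhs_ballP => r r0 rsub.
  exists (ball (s1, s2) (r / 2), [set eta | eta < r / 2]).
    split => //=; first by apply: nbhsx_ballx; rewrite divr_gt0.
    by apply: nbhs_right_lt; rewrite divr_gt0.
  move=> [[t1 t2] eta] /= [[bt1 bt2] etar] x y bx bY Exy.
  apply: (rsub (x, y)) Exy; split => /=.
    rewrite [r](splitr r); apply: (ball_triangle bt1).
    by apply: le_ball bx; rewrite ltW.
  rewrite [r](splitr r); apply: (ball_triangle bt2).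
  by apply: le_ball bY; rewrite ltW.
have [eta eta0 Heta] := pick_pos H.
exists eta => // s1 s2 x y S1s S2s b1 b2.
exact: (Heta (s1, s2)).
Qed.

Lemma ball_split (x y z : T) (r e : R) : ball x (r / 2) y -> ball y e z -> e < r / 2 ->
  ball x r z.
Proof.
move=> b1 b2 er; rewrite [r](splitr r); apply: (ball_triangle b1).
by apply: le_ball b2; rewrite ltW.
Qed.

Lemma L2 (K L : set T) (eta : R) : compact [set: T] -> closed K -> closed L -> 0 < eta ->
  exists2 eps, 0 < eps & forall k l z, K k -> L l -> ball k eps l -> ball k eps z ->
     exists2 s, (K `&` L) s & ball s eta z.
Proof.
move=> cT cK cL eta0.
have H : \forall eps \near 0^'+, [set: T] `<=` (fun t => K t -> forall l z, L l ->
    ball t eps l -> ball t eps z -> exists2 s, (K `&` L) s & ball s eta z).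
  apply: (iffLR (compact_near_coveringP _) cT).
  move=> t _.
  have [Kt|nKt] := pselect (K t); last first.
    have : nbhs t (~` K) by apply: open_nbhs_nbhs; split => //; rewrite openC.
    move=> nK; exists (~` K, setT); first by split => //=; exact: filterT.
    by move=> [t' e] /= [nKt' _] Kt'.
  have [Lt|nLt] := pselect (L t); last first.
    have : nbhs t (~` L) by apply: open_nbhs_nbhs; split => //; rewrite openC.
    case/nbhs_ballP => r r0 rsub.
    exists (ball t (r / 2), [set e | e < r / 2]).
      split => //=; first by apply: nbhsx_ballx; rewrite divr_gt0.
      by apply: nbhs_right_lt; rewrite divr_gt0.
    move=> [t' e] /= [bt er] _ l z Ll bl _.
    by exfalso; exact: (rsub l (ball_split bt bl er) Ll).
  exists (ball t (eta / 2), [set e | e < eta / 2]).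
    split => //=; first by apply: nbhsx_ballx; rewrite divr_gt0.
    by apply: nbhs_right_lt; rewrite divr_gt0.
  move=> [t' e] /= [bt er] _ l z Ll _ bz.
  by exists t => //; exact: (ball_split bt bz er).
have [eps eps0 Heps] := pick_pos H.
by exists eps => // k l z Kk Ll bl bz; exact: (Heps k I Kk l z Ll bl bz).
Qed.
End An.

Definition fimg (A : finType) (T : Type) (f : T -> A) (K : set T) : {set A} :=
  finset (fun v => `[< exists2 k, K k & f k = v >]).

Lemma fimgP (A : finType) (T : Type) (f : T -> A) (K : set T) v :
  reflect (exists2 k, K k & f k = v) (v \in fimg f K).
Proof. by rewrite /fimg finset.in_set; apply: (iffP (asboolP _)). Qed.

Section TopL.
Variables (T : topologicalType) (E : set (T * T)).

Lemma preim_open (A : finType) (eA : rel A) (f : T -> A) : tepi E eA f ->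
  forall P : set A, open (f @^-1` P).
Proof.
case=> fo _ _ _ P; rewrite openE => x Px.
rewrite /interior; apply: (filterS _ (open_nbhs_nbhs (conj (fo (f x)) (erefl (f x))))).
by move=> y /= ->.
Qed.

Lemma preim_closed (A : finType) (eA : rel A) (f : T -> A) : tepi E eA f ->
  forall P : set A, closed (f @^-1` P).
Proof. by move=> hf P; rewrite -openC; exact: (preim_open hf (~` P)). Qed.

Lemma tconn_const (K : set T) (phi : T -> bool) : tconnected E K ->
  (forall bb, closed [set z | phi z = bb]) ->
  (forall x y, K x -> K y -> E (x, y) -> phi x = phi y) ->
  forall x y, K x -> K y -> phi x = phi y.
Proof.
move=> cK cphi hphi x y Kx Ky; apply: contrapT => nxy; apply: cK.
have ny : phi y = ~~ phi x by move: nxy; case: (phi x); case: (phi y).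
exists (K `&` [set z | phi z = phi x]), (K `&` [set z | phi z = ~~ phi x]); split.
- by exists x.
- by exists y.
- apply/seteqP; split => z; first by move=> [[]|[]].
  move=> Kz; case: (boolP (phi z == phi x)) => /eqP h; [left|right]; split => //.
  by apply/eqP; move/eqP: h; case: (phi z); case: (phi x).
- apply/seteqP; split => z //= [[_ h1] [_ h2]]; move: h2; rewrite h1; by case: (phi x).
- split.
  + by exists [set z | phi z = phi x].
  + by exists [set z | phi z = ~~ phi x].
  + move=> x' y' [Kx' h1] [Ky' h2] Exy; have := hphi _ _ Kx' Ky' Exy.
    by rewrite h1 h2; case: (phi x).
Qed.

Lemma tconn_image (A : finType) (eA : rel A) (f : T -> A) (K : set T) :
  (forall x y, E (x, y) -> E (y, x)) -> tepi E eA f -> tconnected E K ->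
  fconnected eA (fimg f K).
Proof.
move=> Esym hf cK; apply: fconn_of_closed => Z ZS Z0 cl.
have imK : forall x, K x -> f x \in fimg f K.
  by move=> x Kx; apply/fimgP; exists x.
have hphi : forall x y, K x -> K y -> E (x, y) -> (f x \in Z) = (f y \in Z).
  case: (hf) => _ ep _ _.
  move=> x y Kx Ky Exy; apply/idP/idP => H.
    exact: (cl _ _ H (imK _ Ky) (ep _ _ Exy)).
  exact: (cl _ _ H (imK _ Kx) (ep _ _ (Esym _ _ Exy))).
have cphi : forall bb, closed [set z | (f z \in Z) = bb].
  by move=> bb; exact: (preim_closed (P := [set v | (v \in Z) = bb]) hf).
have cc := @tconn_const K (fun x => f x \in Z) cK cphi hphi.
case/set0Pn: Z0 => z zZ.
move: (fintype.subsetP ZS _ zZ) => /fimgP [k0 Kk0 fk0].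
apply/fintype.subsetP => v /fimgP [k Kk <-].
by rewrite (cc k k0 Kk Kk0) fk0.
Qed.

End TopL.

Local Open Scope ring_scope.

Section Main.
Variables (R : realType) (T : pseudoMetricType R) (E : set (T * T)).
Hypothesis hG : is_G E.

Lemma main_contra (K L S1 S2 : set T) (p r : T) :
  closed K -> closed L -> tconnected E K -> tconnected E L ->
  closed S1 -> closed S2 -> S1 `<=` K `&` L -> S2 `<=` K `&` L ->
  K `&` L `<=` S1 `|` S2 -> S1 p -> S2 r ->
  (forall x y, S1 x -> S2 y -> ~ E (x, y)) -> False.
Proof.
move=> cK cL tK tL cS1 cS2 S1KL S2KL KLS S1p S2r sep.
case: hG => [[cT _ _ cE [Erefl Esym]] _ _ ext mesh].
have cS1' : compact S1.
  by rewrite -[S1]setTI; apply: compact_closedI.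
have cS2' : compact S2.
  by rewrite -[S2]setTI; apply: compact_closedI.
have [eta1 eta10 H1] := L1 cE cS1' cS2' sep.
pose eta2 := eta1 / 2.
have eta20 : 0 < eta2 by rewrite divr_gt0.
have [eps eps0 H2] := L2 cT cK cL eta20.
pose eps' := Num.min eps eta2.
have eps'0 : 0 < eps' by rewrite lt_min eps0 eta20.
have eps'le : eps' <= eps by rewrite ge_min lexx.
have eps'le2 : eps' <= eta2 by rewrite ge_min lexx orbT.
have [A [eA [f [gA cfA mf]]]] := mesh eps' eps'0.
have [[fopen fedge fsurj fesurj] _] := cfA.
case: (gA) => gAg _ cAT.
pose a := fimg f K.
pose b := fimg f L.
pose Rs := finset (fun v => [&& v \in a, v \in b &
   `[< exists z s, [/\ f z = v, S1 s & ball s eta2 z] >]]).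
have bsum : forall (x y z : T) (e1 e2 : R), ball x e1 y -> ball y e2 z -> e1 <= eta2 -> e2 <= eta2 ->
    ball x eta1 z.
  move=> x y z e1 e2 b1 b2 l1 l2; rewrite [eta1](splitr eta1); apply: (ball_triangle (le_ball l1 b1)).
  have := le_ball l2 b2; rewrite /eta2; apply.
have clR : forall x y, x \in Rs -> y \in a -> y \in b -> eA x y -> y \in Rs.
  move=> x y; rewrite finset.in_set => /and3P[_ _ /asboolP [z [s [fz S1s bz]]]] ya yb exy.
  have [x1 [x2 [Ex fx1 fx2]]] := fesurj _ _ exy.
  move: ya => /fimgP [k' Kk' fk']; move: yb => /fimgP [l' Ll' fl'].
  have bkl : ball k' eps l' by apply: (le_ball eps'le); apply: mf; rewrite fk' fl'.
  have bkx : ball k' eps x2 by apply: (le_ball eps'le); apply: mf; rewrite fk' fx2.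
  have [s' [Ks' Ls'] bs'] := H2 _ _ _ Kk' Ll' bkl bkx.
  case: (KLS s' (conj Ks' Ls')) => [S1s'|S2s'].
    rewrite finset.in_set; apply/and3P; split; [by apply/fimgP; exists k'|by apply/fimgP; exists l'|].
    by apply/asboolP; exists x2, s'.
  exfalso; apply: (H1 s s' x1 x2 S1s S2s' _ _ Ex).
    apply: (bsum s z x1 eta2 eps' bz _ (lexx _) eps'le2).
    by apply: mf; rewrite fz fx1.
  by apply: (le_ball _ bs'); rewrite /eta2; lra.
have eAsym : symmetric eA by case: gAg.
have hR : forall x y, x \in a -> y \in a -> x \in b -> y \in b -> eA x y ->
    (x \in Rs) = (y \in Rs).
  move=> x y xa ya xb yb exy; apply/idP/idP => H.
    exact: (clR x y H ya yb exy).
  by apply: (clR y x H xa xb); rewrite eAsym.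
have [Kp Lp] := S1KL _ S1p.
have [Kr Lr] := S2KL _ S2r.
have pa : f p \in a by apply/fimgP; exists p.
have pb : f p \in b by apply/fimgP; exists p.
have ra : f r \in a by apply/fimgP; exists r.
have rb : f r \in b by apply/fimgP; exists r.
have pR : f p \in Rs.
  rewrite finset.in_set pa pb /=; apply/asboolP; exists p, p; split => //.
  exact: ballxx.
have rR : f r \notin Rs.
  rewrite finset.in_set ra rb /=; apply/negP => /asboolP [z [s [fz S1s bz]]].
  have brz : ball z eps' r by apply: ball_sym; apply: mf; rewrite fz.
  apply: (H1 s r r r S1s S2r _ _ (Erefl r)).
    exact: (bsum s z r eta2 eps' bz brz (lexx _) eps'le2).
  exact: ballxx.
have tf : tepi E eA f := cfA.1.
have ca := tconn_image Esym tf tK.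
have cb := tconn_image Esym tf tL.
pose eBB := eB eA a b Rs.
have gB : fin_conn_graph eBB.
  case: gA => _ cA0 _.
  split; first exact: eB_graph.
    by rewrite card_prod muln_gt0 cA0 card_bool.
  exact: (eB_conn gAg hR cAT ca cb pa pb ra rb pR rR).
have [h [ch hfh]] := ext A (A * bool)%type eA eBB f fst gA gB cfA (eB_confluent a b Rs gAg).
have th : tepi E eBB h := ch.1.
case: (th) => _ hedge _ _.
have cphi1 : forall bb, closed [set z | (h z).2 = bb].
  by move=> bb; exact: (preim_closed (P := [set u | u.2 = bb]) th).
have cphi2 : forall bb, closed [set z | (h z).2 (+) ((h z).1 \in Rs) = bb].
  by move=> bb; exact: (preim_closed (P := [set u | u.2 (+) (u.1 \in Rs) = bb]) th).
have hphi1 : forall x y, K x -> K y -> E (x, y) -> (h x).2 = (h y).2.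
  move=> x y Kx Ky Exy; have := hedge _ _ Exy; rewrite /eBB /eB => /andP[_ /eqP ->].
  have xa : (h x).1 \in a by rewrite -hfh; apply/fimgP; exists x.
  have ya : (h y).1 \in a by rewrite -hfh; apply/fimgP; exists y.
  by rewrite /tau xa ya /= addbF.
have hphi2 : forall x y, L x -> L y -> E (x, y) ->
    (h x).2 (+) ((h x).1 \in Rs) = (h y).2 (+) ((h y).1 \in Rs).
  move=> x y Lx Ly Exy; have := hedge _ _ Exy; rewrite /eBB /eB => /andP[exy /eqP ->].
  have xb : (h x).1 \in b by rewrite -hfh; apply/fimgP; exists x.
  have yb : (h y).1 \in b by rewrite -hfh; apply/fimgP; exists y.
  rewrite /tau xb yb /=; case: ifP => [/andP[xa ya]|_].
    by rewrite addbF (hR _ _ xa ya xb yb exy).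
  by case: ((h x).2); case: ((h x).1 \in Rs); case: ((h y).1 \in Rs).
have E1 := tconn_const tK cphi1 hphi1 Kp Kr.
have E2 := tconn_const tL cphi2 hphi2 Lp Lr.
rewrite hfh in pR; rewrite hfh in rR.
move: E2; rewrite /= E1 (negbTE rR) pR.
by case: ((h r).2).
Qed.
End Main.

Section Ysec.
Variables (R : realType) (T : pseudoMetricType R) (E : set (T * T)).
Variables (Y : topologicalType) (q : T -> Y).
Hypothesis cT : compact [set: T].
Hypothesis cE : closed E.
Hypothesis Erefl : forall x, E (x, x).
Hypothesis qsurj : forall y : Y, exists x, q x = y.
Hypothesis qE : forall x x', q x = q x' <-> E (x, x').
Hypothesis qopen : forall U : set Y, open U <-> open (q @^-1` U).

Lemma closedY (C : set Y) : closed C <-> closed (q @^-1` C).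
Proof. by rewrite -!openC; exact: (qopen (~` C)). Qed.

Lemma Esat_closedc (C : set T) : compact C -> closed [set y | exists2 x, C x & E (x, y)].
Proof.
move=> cC'; rewrite -openC openE => y0 ny0.
have H : \forall y \near y0, C `<=` (fun x => ~ E (x, y)).
  apply: (iffLR (compact_near_coveringP _) cC') => x Cx.
  have : nbhs (x, y0) (~` E).
    apply: open_nbhs_nbhs; split; first by rewrite openC.
    by move=> Exy; apply: ny0; exists x.
  by move=> H'; apply: (filterS _ H'); move=> [a b].
rewrite /interior; apply: filterS H => y Hy [x Cx Exy].
exact: (Hy x Cx Exy).
Qed.

Lemma Esat_closed (C : set T) : closed C -> closed [set y | exists2 x, C x & E (x, y)].
Proof.
by move=> cC; apply: Esat_closedc; rewrite -[C]setTI; apply: compact_closedI.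
Qed.

Lemma Eclass_closed (x : T) : closed [set z | E (x, z)].
Proof.
have -> : [set z | E (x, z)] = [set z | exists2 w, [set x] w & E (w, z)].
  by apply/seteqP; split => z; [move=> Exz; exists x | move=> [w -> ]].
exact/Esat_closedc/compact_set1.
Qed.

Lemma hausY : hausdorff_space Y.
Proof.
rewrite open_hausdorff => y1 y2 ny.
have [x1 qx1] := qsurj y1; have [x2 qx2] := qsurj y2.
pose F1 := [set z | E (x1, z)]; pose F2 := [set z | E (x2, z)].
have cF1 : compact F1 by rewrite -[F1]setTI; apply: compact_closedI => //; exact: Eclass_closed.
have cF2 : compact F2 by rewrite -[F2]setTI; apply: compact_closedI => //; exact: Eclass_closed.
have sep : forall s t, F1 s -> F2 t -> ~ E (s, t).
  move=> s t F1s F2t Est; move/negP: ny; apply.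
  apply/eqP; rewrite -qx1 -qx2.
  have e1 := (qE x1 s).2 F1s; have e2 := (qE s t).2 Est; have e3 := (qE x2 t).2 F2t.
  by rewrite e1 e2 e3.
have [eta eta0 Heta] := L1 cE cF1 cF2 sep.
pose B1 := [set z | exists2 s, F1 s & ball s eta z].
pose B2 := [set z | exists2 s, F2 s & ball s eta z].
pose U1 := interior B1; pose U2 := interior B2.
have FU1 : F1 `<=` U1.
  move=> s F1s; rewrite /U1 /interior.
  have := nbhsx_ballx s eta eta0; apply: filterS => z bz.
  by exists s.
have FU2 : F2 `<=` U2.
  move=> s F2s; rewrite /U2 /interior.
  have := nbhsx_ballx s eta eta0; apply: filterS => z bz.
  by exists s.
have U12 : forall z, U1 z -> U2 z -> False.
  move=> z /nbhs_singleton [s F1s bs] /nbhs_singleton [t F2t bt].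
  exact: (Heta s t z z F1s F2t bs bt (Erefl z)).
pose W1 := ~` [set y | exists2 x, (~` U1) x & E (x, y)].
pose W2 := ~` [set y | exists2 x, (~` U2) x & E (x, y)].
have oW1 : open W1 by rewrite openC; apply: Esat_closed; rewrite closedC; exact: open_interior.
have oW2 : open W2 by rewrite openC; apply: Esat_closed; rewrite closedC; exact: open_interior.
have satW : forall U : set T, forall z z', (~` [set y | exists2 x, (~` U) x & E (x, y)]) z ->
    q z = q z' -> (~` [set y | exists2 x, (~` U) x & E (x, y)]) z'.
  move=> U z z' Wz qzz' [x nUx Exz']; apply: Wz; exists x => //.
  by apply/qE; rewrite qzz'; apply/qE.
have WU : forall U : set T, (~` [set y | exists2 x, (~` U) x & E (x, y)]) `<=` U.
  by move=> U z Wz; apply: contrapT => nUz; apply: Wz; exists z.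
have preW : forall W : set T, (forall z z', W z -> q z = q z' -> W z') ->
    q @^-1` (q @` W) = W.
  move=> W sW; apply/seteqP; split => z /=; last by move=> Wz; exists z.
  by move=> [w Ww qwz]; exact: (sW w z Ww qwz).
have FW : forall (U : set T) (xx : T), [set z | E (xx, z)] `<=` U ->
    [set z | E (xx, z)] `<=` ~` [set y | exists2 x, (~` U) x & E (x, y)].
  move=> U xx FU z Exz [x nUx Exz'']; apply: nUx; apply: FU.
  by apply/qE; rewrite ((qE xx z).2 Exz) ((qE x z).2 Exz'').
exists (q @` W1, q @` W2) => /=; split.
- by rewrite inE -qx1; exists x1 => //; apply: (FW U1 x1 FU1); exact: Erefl.
- by rewrite inE -qx2; exists x2 => //; apply: (FW U2 x2 FU2); exact: Erefl.
- by apply/qopen; rewrite preW //; exact: satW.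
- by apply/qopen; rewrite preW //; exact: satW.
apply/eqP; apply/seteqP; split => // y [[w1 W1w1 qw1] [w2 W2w2 qw2]].
have W1w2 : W1 w2 by apply: (satW _ w1) => //; rewrite qw1 qw2.
exact: (U12 w2 (WU _ _ W1w2) (WU _ _ W2w2)).
Qed.


Lemma preK_closed (K : set Y) : compact K -> closed (q @^-1` K).
Proof. by move=> cK; apply/closedY; apply: compact_closed => //; exact: hausY. Qed.

Lemma preW (W : set T) : (forall z z', W z -> q z = q z' -> W z') ->
  q @^-1` (q @` W) = W.
Proof.
move=> sW; apply/seteqP; split => z /=; last by move=> Wz; exists z.
by move=> [w Ww qwz]; exact: (sW w z Ww qwz).
Qed.

Lemma tconn_pre (K : set Y) : compact K -> connected K -> tconnected E (q @^-1` K).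
Proof.
move=> cK connK [S1 [S2 [[x1 S1x1] [x2 S2x2] U I [[F1 cF1 S1F] [F2 cF2 S2F] ne]]]].
have cK' := preK_closed cK.
have S1K : S1 `<=` q @^-1` K by rewrite -U => z Sz; left.
have S2K : S2 `<=` q @^-1` K by rewrite -U => z Sz; right.
have sat1 : forall x y, S1 x -> q x = q y -> S1 y.
  move=> x y S1x qxy.
  have Ky : (q @^-1` K) y by rewrite /= -qxy; exact: S1K.
  move: Ky; rewrite -U => -[//|S2y].
  by exfalso; apply: (ne x y S1x S2y); apply/qE.
have sat2 : forall x y, S2 x -> q x = q y -> S2 y.
  move=> x y S2x qxy.
  have Ky : (q @^-1` K) y by rewrite /= -qxy; exact: S2K.
  move: Ky; rewrite -U => -[S1y|//].
  by exfalso; apply: (ne y x S1y S2x); apply/qE.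
have dis : forall z, S1 z -> S2 z -> False.
  by move=> z S1z S2z; have : (S1 `&` S2) z by []; rewrite I.
have cS1 : closed S1 by rewrite S1F; apply: closedI.
have cS2 : closed S2 by rewrite S2F; apply: closedI.
have cqS1 : closed (q @` S1) by apply/closedY; rewrite preW //; exact: sat1.
have cqS2 : closed (q @` S2) by apply/closedY; rewrite preW //; exact: sat2.
have eqK : q @` S1 = K.
  apply: connK.
  - by exists (q x1), x1.
  - exists (~` (q @` S2)); first by rewrite openC.
    apply/seteqP; split => y.
      move=> [s S1s <-]; split; first exact: S1K.
      move=> [t S2t qts]; apply: (dis t) => //; exact: (sat1 s t S1s (esym qts)).
    move=> [Ky nS2]; have [x qx] := qsurj y.
    have : (q @^-1` K) x by rewrite /= qx.
    rewrite -U => -[S1x|S2x]; first by exists x.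
    by exfalso; apply: nS2; exists x.
  - exists (q @` S1) => //; apply/seteqP; split => y.
      by move=> [s S1s <-]; split; [exact: S1K | exists s].
    by move=> [].
have : (q @` S1) (q x2) by rewrite eqK; exact: S2K.
move=> [s S1s qs]; exact: (dis x2 (sat1 s x2 S1s qs) S2x2).
Qed.

Lemma final (hG : is_G E) : hereditarily_unicoherent Y.
Proof.
move=> K L K0 cK connK L0 cL connL B [b0 Bb0] [Op opO BO] [C clC BC].
apply: contrapT => nB.
have cK' := preK_closed cK; have cL' := preK_closed cL.
have tK := tconn_pre cK connK; have tL := tconn_pre cL connL.
pose S1 := q @^-1` B.
pose S2 := q @^-1` K `&` q @^-1` L `&` ~` (q @^-1` Op).
have cS1 : closed S1.
  rewrite /S1 BC.
  have -> : q @^-1` (K `&` L `&` C) = q @^-1` K `&` q @^-1` L `&` q @^-1` C by [].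
  by apply: closedI; [exact: closedI | apply/closedY].
have cS2 : closed S2.
  by apply: closedI; [exact: closedI | rewrite closedC; apply/qopen].
have S1KL : S1 `<=` q @^-1` K `&` q @^-1` L.
  move=> x S1x; have : (K `&` L `&` C) (q x) by rewrite -BC.
  by move=> [[Kx Lx] _]; split.
have S2KL : S2 `<=` q @^-1` K `&` q @^-1` L by move=> x [[Kx Lx] _]; split.
have KLS : q @^-1` K `&` q @^-1` L `<=` S1 `|` S2.
  move=> x [Kx Lx]; have [Ox|nOx] := pselect (Op (q x)).
    by left; rewrite /S1 /= BO.
  by right.
have [p qp] := qsurj b0.
have S1p : S1 p by rewrite /S1 /= qp.
have [y [KLy nBy]] : exists y, (K `&` L) y /\ ~ B y.
  apply: contrapT => H; apply: nB; apply/seteqP; split => y.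
    by rewrite BC => -[].
  by move=> KLy; apply: contrapT => nBy; apply: H; exists y.
have [r qr] := qsurj y.
have S2r : S2 r.
  rewrite /S2 /= qr; split => //.
  by move=> Oy; apply: nBy; rewrite BO.
have sep : forall x y, S1 x -> S2 y -> ~ E (x, y).
  move=> x z S1x S2z Exz; have qxz := (qE x z).2 Exz.
  move: S1x; rewrite /S1 /= BO qxz => -[_ Oz].
  by case: S2z => _; apply.
exact: (main_contra hG cK' cL' tK tL cS1 cS2 S1KL S2KL KLS S1p S2r sep).
Qed.

End Ysec.

Close Scope ring_scope.
Close Scope classical_set_scope.

Theorem mainTheorem15 (R : realType) (T : pseudoMetricType R)
  (E : set (T * T)) (Y : topologicalType) (q : T -> Y) :
  is_G E -> is_quotient_by E q -> hereditarily_unicoherent Y.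
Proof.
move=> hG [qs qE qo].
case: (hG) => [[cT _ _ cE [Er _]] _ _ _ _].
exact: (final cT cE Er qs qE qo hG).
Qed.
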